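(* Let $R$ be a commutative ring with nonzero identity, $\delta$ an expansion of ideals of $R$, and $I$ a proper ideal of $R$ with $\sqrt{\delta(I)}=\delta(\sqrt{I})$. If $I$ is a $\delta$-$n$-ideal of $R$, then $\sqrt{I}$ is a $\delta$-$n$-ideal of $R$. In particular, $I$ is a quasi $n$-ideal of $R$ if and only if $\sqrt{I}$ is an $n$-ideal of $R$.
   Context: An expansion of ideals of a ring $R$ is a map $\delta$ from the set of ideals of $R$ to itself such that $I\subseteq\delta(I)$ for every ideal $I$, and $\delta(I)\subseteq\delta(J)$ whenever $I\subseteq J$. $\sqrt{0}$ denotes the nilradical of $R$. Given an expansion $\delta$, a proper ideal $I$ of $R$ is a $\delta$-$n$-ideal if whenever $a,b\in R$ with $ab\in I$ and $a\notin\sqrt{0}$, then $b\in\delta(I)$. A quasi $n$-ideal is a $\delta_1$-$n$-ideal, where $\delta_1(J)=\sqrt{J}$. An $n$-ideal is a proper ideal $I$ such that $ab\in I$ and $a\notin\sqrt{0}$ imply $b\in I$. *)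

(* Defs.v *)
From mathcomp Require Import all_boot all_algebra.
Set Implicit Arguments. Unset Strict Implicit. Unset Printing Implicit Defensive.
Import GRing.Theory.
Local Open Scope ring_scope.

Section Ideals.
Variable R : comNzRingType.

Definition is_ideal_p (I : R -> Prop) : Prop :=
  I 0 /\ (forall x y, I x -> I y -> I (x - y)) /\ (forall a x, I x -> I (a * x)).

Definition proper_ideal_p (I : R -> Prop) : Prop := is_ideal_p I /\ ~ I 1.

Definition subsetI (I J : R -> Prop) : Prop := forall x, I x -> J x.

Definition radical_set (I : R -> Prop) : R -> Prop := fun x => exists n : nat, I (x ^+ n).

Definition nilradical : R -> Prop := radical_set (fun x => x = 0).

Definition expansion (delta : (R -> Prop) -> (R -> Prop)) : Prop :=
  (forall I, is_ideal_p I -> is_ideal_p (delta I)) /\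
  (forall I, is_ideal_p I -> subsetI I (delta I)) /\
  (forall I J, is_ideal_p I -> is_ideal_p J -> subsetI I J -> subsetI (delta I) (delta J)).

Definition delta_n_ideal (delta : (R -> Prop) -> (R -> Prop)) (I : R -> Prop) : Prop :=
  proper_ideal_p I /\
  (forall a b, I (a * b) -> ~ nilradical a -> delta I b).

Definition quasi_n_ideal (I : R -> Prop) : Prop := delta_n_ideal radical_set I.

Definition n_ideal (I : R -> Prop) : Prop :=
  proper_ideal_p I /\ (forall a b, I (a * b) -> ~ nilradical a -> I b).

End Ideals.

(* Main.v *)
Require Import Defs.
From mathcomp Require Import all_boot all_algebra zify.
Import GRing.Theory.
Local Open Scope ring_scope.

Section Aux.
Variable R : comNzRingType.

Lemma idD (I : R -> Prop) : is_ideal_p I -> forall x y, I x -> I y -> I (x + y).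
Proof.
move=> [h0 [hB hM]] x y hx hy.
have := hB x (0 - y) hx (hB 0 y h0 hy). by rewrite sub0r opprK.
Qed.

Lemma idMn (I : R -> Prop) : is_ideal_p I -> forall x k, I x -> I (x *+ k).
Proof.
move=> hI x k hx; elim: k => [|k IH]; first by rewrite mulr0n; case: hI.
by rewrite mulrS; apply: idD.
Qed.

Lemma idMr (I : R -> Prop) : is_ideal_p I -> forall x a, I x -> I (x * a).
Proof. by move=> [_ [_ hM]] x a hx; rewrite mulrC; apply: hM. Qed.

Lemma rad_ideal (I : R -> Prop) : is_ideal_p I -> is_ideal_p (radical_set I).
Proof.
move=> hI; have hI' := hI; case: hI' => [h0 [hB hM]]; split; last split.
- by exists 1%N; rewrite expr1.
- move=> x y [m hx] [k hy]; exists (m + k)%N.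
  rewrite -[x - y]/(x + (- y)) exprDn.
  apply: (big_ind (fun z => I z)) => //; first by move=> *; apply: idD.
  move=> [i hi] _ /=; apply: idMn => //.
  have hy' : I ((- y) ^+ k) by rewrite exprNn; apply: hM.
  case: (leqP k i) => hki.
  + rewrite -(subnK hki) exprD mulrA; exact: hM.
  + have hm : (m <= m + k - i)%N.
      by lia.
    rewrite -(subnK hm) exprD -mulrA mulrCA; exact: idMr.
- move=> a x [n hx]; exists n; by rewrite exprMn; apply: hM.
Qed.

Lemma rad_rad (I : R -> Prop) x : radical_set (radical_set I) x -> radical_set I x.
Proof. by move=> [n [m h]]; exists (n * m)%N; rewrite exprM. Qed.

Lemma nil_pow (a : R) n : nilradical (a ^+ n) -> nilradical a.
Proof. by move=> [m h]; exists (n * m)%N; rewrite exprM. Qed.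

End Aux.

Theorem proposition2p17 (R : comNzRingType) (I : R -> Prop) (hI : proper_ideal_p I) :
  (forall delta : (R -> Prop) -> (R -> Prop),
      expansion delta ->
      (forall x, radical_set (delta I) x <-> delta (radical_set I) x) ->
      delta_n_ideal delta I -> delta_n_ideal delta (radical_set I)) /\
  (quasi_n_ideal I <-> n_ideal (radical_set I)).
Proof.
have hproper : proper_ideal_p (radical_set I).
  case: hI => hid h1; split; first exact: rad_ideal.
  by move=> [n]; rewrite expr1n.
have part1 : forall delta : (R -> Prop) -> (R -> Prop),
      expansion delta ->
      (forall x, radical_set (delta I) x <-> delta (radical_set I) x) ->
      delta_n_ideal delta I -> delta_n_ideal delta (radical_set I).
  move=> delta hexp heq [_ hd]; split => // a b [n hab] hna.
  apply/heq; exists n; apply: (hd (a ^+ n)); first by rewrite -exprMn.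
  by move/nil_pow.
split => //; split.
- move=> hq.
  have hexp : expansion (@radical_set R).
    split; first by move=> J; apply: rad_ideal.
    split; first by move=> J _ x hx; exists 1%N; rewrite expr1.
    by move=> J K _ _ hJK x [n hx]; exists n; apply: hJK.
  have [hp hd] := part1 _ hexp (fun x => conj id id) hq.
  split => // a b hab hna; apply: rad_rad; exact: hd hab hna.
- move=> [_ hn]; split => // a b hab hna.
  by apply: (hn a b) => //; exists 1%N; rewrite expr1.
Qed.
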